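(* There exists a constant $C_1>0$ such that $$\mathcal J(v)\ge C_1\|v\|_{W_2^1(\mathcal T)}^2\qquad\text{for all } v\in\mathcal W.$$
   Context: Tree setup. Let $\mathcal T$ be a compact rooted tree with edges $e_j=[v_{k_j},v_j]$, $j=1,\dots,m$. Here $k_1=0$, $k_j\in\{1,\dots,d\}$ for $j\ge2$, and iterating $k$ from any $j$ reaches $0$. The root is $v_0$, internal vertices are $v_1,\dots,v_d$, and boundary vertices are $v_{d+1},\dots,v_m$. Edge $e_j$ has length $T_j$ and is parametrized by $[0,T_j]$ from $v_{k_j}$ to $v_j$. Fix $\tau\ge0$ with $\tau<T_j$ for all $j$. Spaces. Set $W_2^1(\mathcal T_\tau):=W_2^1[-\tau,T_1]\oplus\bigoplus_{j\ge2}W_2^1[0,T_j]$ and $W_2^1(\mathcal T):=\bigoplus_jW_2^1[0,T_j]$. $\mathcal W$ is the subspace of $W_2^1(\mathcal T_\tau)$ of all real tuples $v$ satisfying: - $v_j(0)=v_{k_j}(T_{k_j})$ for $j\ge2$; - $v_j=0$ on $[T_j-\tau,T_j]$ for $j>d$; - $v_1=0$ on $[-\tau,0]$. It is regarded as a subspace of $W_2^1(\mathcal T)$ by restriction. Operators. Fix real $b_j,c_j$. Define $$\ell_jv(t)=v_j'(t)+b_jv_j(t)+c_jv_j(t-\tau),\qquad 0<t<T_j,$$ where for $j\ge2$ and $0<t<\tau$ the term $v_j(t-\tau)$ means $v_{k_j}(t-\tau+T_{k_j})$, and for $j=1$ it uses $v_1$ on $[-\tau,0]$. Set $$\mathcal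 J(v)=\sum_{j=1}^m\int_0^{T_j}(\ell_jv(t))^2\,dt.$$ *)

(* Defs.v *)
From HB Require Import structures.
From mathcomp Require Import all_boot all_order all_algebra.
From mathcomp Require Import all_classical all_reals all_analysis.
Set Implicit Arguments. Unset Strict Implicit. Unset Printing Implicit Defensive.
Import Order.TTheory GRing.Theory Num.Theory.
Local Open Scope classical_set_scope.
Local Open Scope ring_scope.

Section Defs.
Variable R : realType.
Local Notation mu := (@lebesgue_measure R).

(* g is a (weak) derivative of f on [a,b] in the W_2^1 sense:
   g is square integrable on [a,b] and f is the primitive of g. *)
Definition weak_deriv (a b : R) (f g : R -> R) : Prop :=
  measurable_fun `[a, b] g /\
  mu.-integrable `[a, b] (EFin \o g) /\
  (\int[mu]_(x in `[a, b]) ((g x) ^+ 2)%:E < +oo)%E /\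
  (forall x, a <= x <= b -> f x = f a + \int[mu]_(t in `[a, x]) g t).

Definition W21 (a b : R) (f : R -> R) : Prop := exists g, weak_deriv a b f g.

(* Rooted tree data: edges e_j = [v_{k j}, v_j], j = 1..m; vertices v_0 (root),
   v_1..v_d internal, v_{d+1}..v_m boundary. *)
Definition tree_data (m d : nat) (k : nat -> nat) : Prop :=
  (1 <= m)%N /\
  k 1%N = 0%N /\
  (forall j, (2 <= j <= m)%N -> (1 <= k j <= d)%N) /\
  (forall j, (1 <= j <= m)%N -> exists n, iter n k j = 0%N) /\
  (forall i, (1 <= i <= d)%N -> exists j, (1 <= j <= m)%N /\ k j = i).

Definition in_W (m d : nat) (k : nat -> nat) (T : nat -> R) (tau : R)
    (v : nat -> R -> R) : Prop :=
  W21 (- tau) (T 1%N) (v 1%N) /\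
  (forall j, (2 <= j <= m)%N -> W21 0 (T j) (v j)) /\
  (forall j, (2 <= j <= m)%N -> v j 0 = v (k j) (T (k j))) /\
  (forall j, (d < j <= m)%N -> forall t, T j - tau <= t <= T j -> v j t = 0) /\
  (forall t, - tau <= t <= 0 -> v 1%N t = 0).

(* delayed value v_j(t - tau), continued onto the parent edge for j >= 2 *)
Definition delayed (k : nat -> nat) (T : nat -> R) (tau : R)
    (v : nat -> R -> R) (j : nat) (t : R) : R :=
  if (t - tau < 0) && (j != 1%N) then v (k j) (t - tau + T (k j))
  else v j (t - tau).

Definition ell (k : nat -> nat) (T : nat -> R) (tau : R) (b c : nat -> R)
    (v g : nat -> R -> R) (j : nat) (t : R) : R :=
  g j t + b j * v j t + c j * delayed k T tau v j t.

Definition Jfun (m : nat) (k : nat -> nat) (T : nat -> R) (tau : R)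
    (b c : nat -> R) (v g : nat -> R -> R) : \bar R :=
  (\sum_(1 <= j < m.+1)
     \int[mu]_(t in `[0%R, T j]%classic) ((ell k T tau b c v g j t) ^+ 2)%:E)%E.

Definition normW2 (m : nat) (T : nat -> R) (v g : nat -> R -> R) : \bar R :=
  (\sum_(1 <= j < m.+1)
     \int[mu]_(t in `[0%R, T j]%classic) ((v j t) ^+ 2 + (g j t) ^+ 2)%:E)%E.

End Defs.

(* Main.v *)
Require Import Defs.
From HB Require Import structures.
From mathcomp Require Import all_boot all_order all_algebra.
From mathcomp Require Import all_classical all_reals all_analysis.
From mathcomp Require Import ring lra.
From mathcomp Require Import measurable_realfun.
Import Order.TTheory GRing.Theory Num.Theory.
Import numFieldNormedType.Exports.
Local Open Scope classical_set_scope.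
Local Open Scope ring_scope.

Lemma cont_wd (R : realType) (a b : R) (u g : R -> R) : a <= b ->
  weak_deriv a b u g -> {within `[a, b]%classic, continuous u}.
Proof.
move=> ab [mg [ig [_ hu]]].
have hc := @parameterized_integral_continuous R _ _ g ab ig.
have hc2 : {within `[a, b]%classic, continuous (fun x => u a + parameterized_integral lebesgue_measure a x g)}.
  move=> x.
  rewrite /continuous_at /from_subspace /=.
  apply: cvgD.
  - apply: cvg_cst.
  - exact: hc.
apply: (subspace_eq_continuous _ hc2).
move=> x; rewrite inE /= in_itv /= => /andP[h1 h2].
by rewrite /from_subspace /= (hu x) ?h1 ?h2.
Qed.

Lemma meas_wd (R : realType) (a b : R) (u g : R -> R) : a <= b ->
  weak_deriv a b u g -> measurable_fun `[a, b]%classic u.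
Proof.
move=> ab h; apply: measurable_realfun.subspace_continuous_measurable_fun => //.
exact: cont_wd h.
Qed.

Lemma incr_wd (R : realType) (a b x y : R) (u g : R -> R) :
  weak_deriv a b u g -> a <= x -> x <= y -> y <= b ->
  u y - u x = \int[lebesgue_measure]_(t in `[x, y]) g t.
Proof.
move=> [mg [ig [_ hu]]] ax xy yb.
have -> : u y - u x = \int[lebesgue_measure]_(t in `[a, y]) g t - \int[lebesgue_measure]_(t in `[a, x]) g t.
  rewrite (hu y); last by rewrite (le_trans ax xy) yb.
  rewrite (hu x); last by rewrite ax (le_trans xy yb).
  ring.
have iy : lebesgue_measure.-integrable `[a, y] (EFin \o g).
  apply: integrableS ig => //; apply: subset_itvl; by rewrite bnd_simp.
rewrite (@Rintegral_itvB R g (BLeft a) (BRight y) x) ?bnd_simp //.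
rewrite Rintegral_itv_obnd_cbnd //.
apply: integrableS iy => //; apply: subset_itvr; by rewrite bnd_simp.
Qed.
Lemma mu_itv (R : realType) (a x : R) : a <= x ->
  lebesgue_measure (`[a, x]%classic : set R) = (x - a)%:E.
Proof.
move=> ax; rewrite lebesgue_measure_itv /=.
case: ltP => [_|h]; first by rewrite EFinB.
rewrite lee_fin in h; have -> : x = a by apply/eqP; rewrite eq_le ax h.
by rewrite subrr.
Qed.

Lemma step_int (R : realType) (T a x s L : R) (f g : R -> R) :
 0 <= a -> a <= x -> x <= T -> 0 < s -> 0 <= L ->
 lebesgue_measure.-integrable `[0, T]%classic (EFin \o g) ->
 measurable_fun `[0, T]%classic f ->
 (\int[lebesgue_measure]_(y in `[0%R, T%R]%classic) ((f y) ^+ 2)%:E <= (s ^+ 2)%:E)%E ->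
 (forall y, a <= y <= x -> `|g y| <= `|f y| + L) ->
 \int[lebesgue_measure]_(y in `[a, x]) `|g y| <= s / 2 + (s / 2 + L) * (x - a).
Proof.
move=> a0 ax xT s0 L0 ig mf hf hg.
have sub : (`[a, x]%classic : set R) `<=` `[0, T]%classic.
  by apply: subset_itv; rewrite bnd_simp.
have igD : lebesgue_measure.-integrable `[a, x]%classic (EFin \o g).
  exact: integrableS ig.
have mgD : measurable_fun `[a, x]%classic g.
  by apply/measurable_realfun.measurable_EFinP; case/integrableP: igD.
have mfD : measurable_fun `[a, x]%classic f by exact: measurable_funS mf.
have fin : (\int[lebesgue_measure]_(y in `[a%R, x%R]%classic) (`|g y|)%:E)%E \is a fin_num.
  rewrite ge0_fin_numE; last by apply: integral_ge0 => y _; rewrite lee_fin.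
  by case/integrableP: igD.
rewrite /Rintegral -lee_fin fineK //.
set F1 := (fun y => ((s / 2)^-1 / 4 * (f y ^+ 2))%:E) : R -> \bar R.
have hk : 0 <= (s / 2)^-1 / 4 by rewrite mulr_ge0 // invr_ge0 divr_ge0 // ltW.
have F10 : forall y, `[a, x]%classic y -> (0 <= F1 y)%E.
  by move=> y _; rewrite lee_fin mulr_ge0 // sqr_ge0.
have mF1 : measurable_fun `[a, x]%classic F1.
  apply/measurable_realfun.measurable_EFinP.
  apply: measurable_realfun.measurable_funM; first exact: measurable_cst.
  exact: measurable_realfun.measurable_funX.
have F20 : forall y, `[a, x]%classic y -> (0 <= (cst (s / 2 + L)%:E) y)%E.
  by move=> y _; rewrite lee_fin addr_ge0 // divr_ge0 // ltW.
have mF2 : measurable_fun `[a, x]%classic (cst (s / 2 + L)%:E : R -> \bar R).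
  exact: measurable_cst.
have mi : measurable (`[a, x]%classic : set R) by exact: measurable_itv.
apply: (@le_trans _ _ (\int[lebesgue_measure]_(y in `[a%R, x%R]%classic) F1 y
   + \int[lebesgue_measure]_(y in `[a%R, x%R]%classic) (cst (s / 2 + L)%:E) y)%E).
  rewrite -(ge0_integralD lebesgue_measure mi F10 mF1 F20 mF2).
  apply: ge0_le_integral.
  - exact: mi.
  - by move=> y _; rewrite lee_fin.
  - apply/measurable_realfun.measurable_EFinP.
    exact: measurableT_comp (@measurable_realfun.normr_measurable R setT) mgD.
  - exact: emeasurable_funD.
  - move=> y [/andP [] ]; rewrite !bnd_simp => ay yx.
    rewrite /F1 /= -EFinD lee_fin.
    apply: (le_trans (hg y _)); first by rewrite ay yx.
    suff : `|f y| <= (s / 2)^-1 / 4 * f y ^+ 2 + s / 2 by lra.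
    have h1 : `|f y| ^+ 2 = f y ^+ 2 by rewrite real_normK // num_real.
    rewrite -h1.
    have hs2 : 0 < s / 2 by rewrite divr_gt0.
    have hz : 0 <= `|f y| by [].
    set z := `|f y|; set t := s / 2.
    have tk : t * t^-1 = 1 by rewrite mulfV // gt_eqF.
    have hk0 : 0 < t^-1 by rewrite invr_gt0.
    set k := t^-1 in tk hk0 *.
    have := mulr_ge0 (ltW hk0) (sqr_ge0 (z - 2 * t)).
    have e1 : k * (z - 2 * t) ^+ 2 = k * z ^+ 2 - 4 * (t * k) * z + 4 * (t * k) * t by ring.
    rewrite e1 tk; nra.
have mf2 : measurable_fun `[a, x]%classic (fun y => (f y ^+ 2)%:E : \bar R).
  apply/measurable_realfun.measurable_EFinP.
  exact: measurable_realfun.measurable_funX.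
have eF : (\int[lebesgue_measure]_(y in `[a%R, x%R]%classic) F1 y =
   ((s / 2)^-1 / 4)%:E * \int[lebesgue_measure]_(y in `[a%R, x%R]%classic) (f y ^+ 2)%:E)%E.
  rewrite -(ge0_integralZl_EFin lebesgue_measure mi _ mf2 hk).
    by apply: eq_integral => y _; rewrite /F1 EFinM.
  by move=> y _; rewrite lee_fin sqr_ge0.
have hI : (\int[lebesgue_measure]_(y in `[a%R, x%R]%classic) (f y ^+ 2)%:E <= (s ^+ 2)%:E)%E.
  apply: le_trans hf.
  apply: (@ge0_subset_integral _ _ _ lebesgue_measure `[a, x]%classic `[0, T]%classic
     (measurable_itv _) (measurable_itv _)); last exact: sub.
  - apply/measurable_realfun.measurable_EFinP.
    exact: measurable_realfun.measurable_funX.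
  - by move=> y _; rewrite lee_fin sqr_ge0.
rewrite eF integral_cst //.
have -> : ((s / 2 + L)%:E * lebesgue_measure (`[a, x]%classic : set R) = (s / 2 + L)%:E * (x - a)%:E)%E.
  by congr (_ * _)%E; exact: mu_itv.
apply: (@le_trans _ _ (((s / 2)^-1 / 4)%:E * (s ^+ 2)%:E + (s / 2 + L)%:E * (x - a)%:E)%E).
  by apply: leeD2r; apply: lee_wpmul2l => //; rewrite lee_fin.
rewrite -!EFinM -EFinD lee_fin.
have -> : (s / 2)^-1 / 4 * s ^+ 2 = s / 2.
  field; by rewrite gt_eqF.
by [].
Qed.

Arguments cont_wd {R a b u g}.
Arguments meas_wd {R a b u g}.
Arguments incr_wd {R a b x y u g}.
Arguments step_int {R T a x s L f g}.


Definition EP (R : realType) (T b c K : R) : Prop :=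
  forall (u g w : R -> R) (s P : R),
   weak_deriv 0 T u g ->
   measurable_fun `[0, T]%classic (fun y => g y + b * u y + c * w y) ->
   (\int[lebesgue_measure]_(y in `[0%R, T%R]%classic) ((g y + b * u y + c * w y) ^+ 2)%:E <= (s ^+ 2)%:E)%E ->
   0 < s -> 0 <= P -> `|u 0| <= P ->
   (forall t, 0 <= t <= T -> `|w t| <= P \/ exists2 t', 0 <= t' <= t & w t = u t') ->
   forall t, 0 <= t <= T -> `|u t| <= K * (s + P).
Arguments EP {R}.

Lemma EP_mono (R : realType) (T b c K K' : R) : EP T b c K -> K <= K' -> EP T b c K'.
Proof.
move=> h KK u g w s P hwd mf hf s0 P0 hu0 hw t ht.
apply: le_trans (h u g w s P hwd mf hf s0 P0 hu0 hw t ht) _.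
by apply: ler_wpM2r => //; lra.
Qed.

Lemma edge (R : realType) (T b c : R) : 0 < T -> exists K : R, 1 <= K /\ EP T b c K.
Proof.
move=> T0.
suff : exists K : R, 1 <= K /\
  forall (u g w : R -> R) (s P : R),
   weak_deriv 0 T u g ->
   measurable_fun `[0, T]%classic (fun y => g y + b * u y + c * w y) ->
   (\int[lebesgue_measure]_(y in `[0%R, T%R]%classic) ((g y + b * u y + c * w y) ^+ 2)%:E <= (s ^+ 2)%:E)%E ->
   0 < s -> 0 <= P -> `|u 0| <= P ->
   (forall t, 0 <= t <= T -> `|w t| <= P \/ exists2 t', 0 <= t' <= t & w t = u t') ->
   forall t, 0 <= t <= T -> `|u t| <= K * (s + P).
  by [].
set B := `|b| + `|c|.
have B0 : 0 <= B by rewrite addr_ge0.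
set h := (2 * B + 1)^-1.
have h0 : 0 < h by rewrite invr_gt0; lra.
have hB : h * B <= 1 / 2.
  have e : h * (2 * B + 1) = 1 by rewrite /h mulVf // gt_eqF //; lra.
  have e2 : 2 * (h * B) + h = h * (2 * B + 1) by ring.
  lra.
set N := Num.Def.archi_bound (T / h).
have hN : T <= N%:R * h.
  have := @archi_boundP _ (T / h) (divr_ge0 (ltW T0) (ltW h0)).
  rewrite -/N ltr_pdivrMr // => /ltW //.
exists (3 ^+ N * (1 + h)); split.
  have h3 : 1 <= 3 ^+ N :> R by apply: exprn_ege1; lra.
  nra.
move=> u g w s P hwd mf hf s0 P0 hu0 hw.
have Q : forall n : nat, forall t, 0 <= t <= T -> t <= n%:R * h ->
    `|u t| <= 3 ^+ n * (1 + h) * (s + P).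
  have cu := cont_wd (ltW T0) hwd.
  have ig : lebesgue_measure.-integrable `[0, T]%classic (EFin \o g).
    by case: hwd => _ [].
  elim=> [|n IH] t /andP[t0 tT] tn.
    rewrite mul0r in tn.
    have -> : t = 0 by apply/eqP; rewrite eq_le tn t0.
    rewrite expr0 mul1r.
    have sP : 0 <= s + P by lra.
    apply: le_trans hu0 _; nra.
  have An0 : (1 + h) * (s + P) <= 3 ^+ n * (1 + h) * (s + P).
    have h3 : 1 <= 3 ^+ n :> R by apply: exprn_ege1; lra.
    have sP : 0 <= (1 + h) * (s + P) by apply: mulr_ge0; lra.
    rewrite -mulrA; nra.
  have Ang : 0 <= 3 ^+ n * (1 + h) * (s + P).
    by apply: le_trans An0; apply: mulr_ge0; lra.
  have An1 : 3 ^+ n.+1 * (1 + h) * (s + P) = 3 * (3 ^+ n * (1 + h) * (s + P)).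
    by rewrite exprS; ring.
  have [tle|tgt] := leP t (n%:R * h).
    apply: le_trans (IH t _ tle) _; first by rewrite t0 tT.
    rewrite An1; lra.
  set a := n%:R * h in tgt IH.
  have a0 : 0 <= a by rewrite mulr_ge0 // ltW.
  have ha : t <= a + h by move: tn; rewrite -[n.+1]addn1 natrD mulrDl mul1r.
  have cut : {within `[0, t]%classic, continuous (fun y => `|u y|)}.
    apply: (@continuous_subspaceW _ _ _ `[0, T]%classic).
      by apply: subset_itvl; rewrite bnd_simp.
    move=> y; apply: continuous_comp; first exact: cu.
    exact: norm_continuous.
  have [xs xs_in xs_max] := EVT_max t0 cut.
  move: (xs_in); rewrite in_itv /= => /andP[xs0 xst].
  have xsT : xs <= T by exact: le_trans tT.
  suff hS : `|u xs| <= 3 ^+ n.+1 * (1 + h) * (s + P).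
    by apply: le_trans hS; apply: xs_max; rewrite in_itv /= t0 lexx.
  have [xsa|axs] := leP xs a.
    apply: le_trans (IH xs _ xsa) _; first by rewrite xs0 xsT.
    rewrite An1; lra.
  set S := `|u xs|.
  set An := 3 ^+ n * (1 + h) * (s + P) in An0 Ang An1 IH *.
  have hua : `|u a| <= An.
    apply: IH; last exact: lexx.
    by rewrite a0 (le_trans (ltW axs) xsT).
  have hSu : forall y, 0 <= y <= t -> `|u y| <= S.
    by move=> y /andP[y0 yt]; apply: xs_max; rewrite in_itv /= y0 yt.
  have S0 : 0 <= S by rewrite /S normr_ge0.
  set L := `|b| * S + `|c| * (S + P).
  have L0 : 0 <= L by rewrite addr_ge0 // mulr_ge0 //; lra.
  have hg : forall y, a <= y <= xs -> `|g y| <= `|g y + b * u y + c * w y| + L.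
    move=> y /andP[ay yxs].
    have y0 : 0 <= y by exact: le_trans ay.
    have yt : y <= t by exact: le_trans xst.
    have huy : `|u y| <= S by apply: hSu; rewrite y0 yt.
    have hwy : `|w y| <= S + P.
      have hyT : 0 <= y <= T by rewrite y0 (le_trans yt tT).
      have [hp|[y' /andP[y'0 y'y] ->]] := hw y hyT.
        lra.
      have : `|u y'| <= S by apply: hSu; rewrite y'0 (le_trans y'y yt).
      lra.
    set F := g y + b * u y + c * w y.
    have -> : g y = F - b * u y - c * w y by rewrite /F; ring.
    apply: (le_trans (ler_normB _ _)).
    apply: (le_trans (lerD (ler_normB _ _) (lexx _))).
    rewrite !normrM -addrA lerD2l /L.
    apply: lerD; apply: ler_wpM2l => //.
  have hst := step_int a0 (ltW axs) xsT s0 L0 ig mf hf hg.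
  have inc := incr_wd hwd a0 (ltW axs) xsT.
  have igs : lebesgue_measure.-integrable `[a, xs]%classic (EFin \o g).
    apply: integrableS ig => //; apply: subset_itv; rewrite bnd_simp //.
  have mi : measurable (`[a, xs]%classic : set R) by exact: measurable_itv.
  have hn := @le_normr_Rintegral _ _ _ (@lebesgue_measure R) `[a, xs]%classic g (measurable_itv _) igs.
  have hS1 : S <= `|u a| + `|u xs - u a|.
    by have := ler_normD (u a) (u xs - u a); rewrite [u a + _]addrC subrK.
  rewrite inc in hS1.
  have hS2 : S <= An + (s / 2 + (s / 2 + L) * (xs - a)).
    apply: (le_trans hS1); apply: lerD => //; exact: le_trans hn hst.
  clear hS1 hn hst inc hg igs cut xs_max hw hf mf cu ig IH hSu.
  have hxa : xs - a <= h by rewrite lerBlDl; exact: le_trans xst ha.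
  have k1 : (s / 2 + L) * (xs - a) <= (s / 2 + L) * h.
    by apply: ler_wpM2l => //; lra.
  have k2 : L * h <= (S + P) / 2.
    have : L <= B * (S + P).
      have e : B * (S + P) = `|b| * S + `|b| * P + `|c| * (S + P) by rewrite /B; ring.
      have := mulr_ge0 (normr_ge0 b) P0.
      rewrite e /L; lra.
    move=> hL.
    have : L * h <= B * (S + P) * h by apply: ler_wpM2r => //; lra.
    have : B * (S + P) * h = (h * B) * (S + P) by ring.
    have : (h * B) * (S + P) <= 1 / 2 * (S + P) by apply: ler_wpM2r => //; lra.
    lra.
  have k3 : (s / 2 + L) * h = s * h / 2 + L * h by ring.
  have k4 : (1 + h) * (s + P) = s + s * h + P + P * h by ring.
  have Ph : 0 <= P * h by rewrite mulr_ge0 // ltW.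
  rewrite An1.
  lra.
move=> t /andP[t0 tT].
rewrite -mulrA mulrA.
apply: Q; first by rewrite t0 tT.
exact: le_trans hN.
Qed.


Lemma d_le_m m d k : tree_data m d k -> (d <= m)%N.
Proof.
case=> [_ [_ [_ [_ hs]]]].
have sub : {subset iota 1 d <= map k (iota 1 m)}.
  move=> i; rewrite mem_iota => /andP[i1 i2].
  have hi : (1 <= i <= d)%N by rewrite i1 -ltnS -add1n.
  have [j [hj kj]] := hs i hi.
  by apply/mapP; exists j => //; rewrite mem_iota add1n ltnS.
by have := uniq_leq_size (iota_uniq 1 d) sub; rewrite size_iota size_map size_iota.
Qed.

Lemma kj_range m d k j : tree_data m d k -> (2 <= j <= m)%N -> (1 <= k j <= m)%N.
Proof.
move=> td hj; have dm := d_le_m _ _ _ td.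
case: td => [_ [_ [hk _]]].
have /andP[h1 h2] := hk j hj.
by rewrite h1 (leq_trans h2 dm).
Qed.

Lemma unif_depth (m : nat) (Q : nat -> nat -> Prop) :
  (forall j, (1 <= j <= m)%N -> exists n, Q j n) ->
  exists N, forall j, (1 <= j <= m)%N -> exists2 n, (n <= N)%N & Q j n.
Proof.
elim: m => [|m IH] h.
  by exists 0%N => j /andP[h1 h2]; move: (leq_trans h1 h2).
have [N1 hN1] : exists N, forall j, (1 <= j <= m)%N -> exists2 n, (n <= N)%N & Q j n.
  by apply: IH => j /andP[h1 h2]; apply: h; rewrite h1 (leq_trans h2).
have hm : (1 <= m.+1 <= m.+1)%N by rewrite leqnn.
have [n2 hn2] := h m.+1 hm.
exists (N1 + n2)%N => j /andP[h1 h2].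
rewrite leq_eqVlt in h2; case/orP: h2 => [/eqP ->|h2].
  by exists n2 => //; rewrite leq_addl.
have hj : (1 <= j <= m)%N by rewrite h1 -ltnS.
have [n hn hq] := hN1 j hj.
by exists n => //; rewrite (leq_trans hn) // leq_addr.
Qed.

Lemma unif_K (R : realType) (m : nat) (Q : nat -> R -> Prop) :
  (forall j K K', Q j K -> K <= K' -> Q j K') ->
  (forall j, (1 <= j <= m)%N -> exists K, 1 <= K /\ Q j K) ->
  exists K, 1 <= K /\ forall j, (1 <= j <= m)%N -> Q j K.
Proof.
move=> mono; elim: m => [|m IH] h.
  by exists 1; split => // j /andP[h1 h2]; move: (leq_trans h1 h2).
have [K1 [K11 hK1]] : exists K, 1 <= K /\ forall j, (1 <= j <= m)%N -> Q j K.
  by apply: IH => j /andP[h1 h2]; apply: h; rewrite h1 (leq_trans h2).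
have hm : (1 <= m.+1 <= m.+1)%N by rewrite leqnn.
have [K2 [K21 hK2]] := h m.+1 hm.
exists (K1 + K2); split; first lra.
move=> j /andP[h1 h2].
rewrite leq_eqVlt in h2; case/orP: h2 => [/eqP ->|h2].
  by apply: mono hK2 _; lra.
have hj : (1 <= j <= m)%N by rewrite h1 -ltnS.
by apply: mono (hK1 j hj) _; lra.
Qed.

Lemma sum_term_le (R : realType) (F : nat -> \bar R) (m j : nat) :
  (forall i, (0 <= F i)%E) -> (1 <= j <= m)%N ->
  (F j <= \sum_(1 <= i < m.+1) F i)%E.
Proof.
move=> F0; elim: m => [|m IH] /andP[j1 jm]; first by move: (leq_trans j1 jm).
rewrite big_nat_recr //=.
rewrite leq_eqVlt in jm; case/orP: jm => [/eqP ->|jm].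
  by apply: leeDr; apply: sume_ge0 => i _.
apply: (le_trans (IH _)); first by rewrite j1 -ltnS.
by apply: leeDl.
Qed.

Lemma sum_bound (R : realType) (F G : nat -> \bar R) (Z : nat -> R) (m : nat) :
  (forall i, (0 <= G i)%E) ->
  (forall i, (1 <= i <= m)%N -> (F i <= G i + G i + (Z i)%:E)%E) ->
  (\sum_(1 <= i < m.+1) F i <= \sum_(1 <= i < m.+1) G i + \sum_(1 <= i < m.+1) G i
     + (\sum_(1 <= i < m.+1) Z i)%:E)%E.
Proof.
move=> G0; elim: m => [|m IH] h.
  by rewrite !big_geq // !adde0.
rewrite !(@big_nat_recr _ _ _ m.+1) //=.
rewrite EFinD.
rewrite (addeACA (\sum_(1 <= i < m.+1) G i)).
rewrite (addeACA (_ + _)).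
apply: leeD; last by apply: h; rewrite leqnn.
apply: IH => i /andP[i1 im]; apply: h; rewrite i1 (leq_trans im) //.
Qed.


Lemma meas_shift (R : realType) (D F : set R) (u : R -> R) (r : R) :
  measurable D -> measurable F -> measurable_fun F u ->
  (forall t, D t -> F (t + r)) ->
  measurable_fun D (fun t => u (t + r)).
Proof.
move=> mD mF mu hDF.
have mg : measurable_fun D (fun t : R => t + r).
  exact: measurable_funD (@measurable_id _ _ D) (measurable_cst r).
apply: (measurable_comp mF _ mu mg).
by move=> _ [t Dt <-]; apply: hDF.
Qed.

Lemma meas_delayed1 (R : realType) (k : nat -> nat) (T : nat -> R) (tau : R)
  (v : nat -> R -> R) :
  0 <= tau -> tau < T 1%N -> W21 (- tau) (T 1%N) (v 1%N) ->
  measurable_fun `[0, T 1%N]%classic (delayed k T tau v 1%N).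
Proof.
move=> t0 tT [g1 hg1].
have mv : measurable_fun `[- tau, T 1%N]%classic (v 1%N).
  apply: meas_wd hg1; lra.
have ms : measurable_fun `[0, T 1%N]%classic (fun t => v 1%N (t + - tau)).
  apply: meas_shift mv _ => //.
  move=> t /=; rewrite !in_itv /= => /andP[h1 h2].
  apply/andP; split; lra.
apply: (eq_measurable_fun _ _ ms).
by move=> t _; rewrite /delayed eqxx andbF.
Qed.

Lemma meas_delayed2 (R : realType) (k : nat -> nat) (T : nat -> R) (tau : R)
  (v : nat -> R -> R) (j : nat) :
  j != 1%N -> 0 <= tau -> tau < T j -> tau < T (k j) ->
  measurable_fun `[0, T j]%classic (v j) ->
  measurable_fun `[0, T (k j)]%classic (v (k j)) ->
  measurable_fun `[0, T j]%classic (delayed k T tau v j).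
Proof.
move=> j1 t0 tj tk mj mk.
rewrite (@itv_bndbnd_setU _ _ (BLeft 0) (BLeft tau) (BRight (T j))); last 2 first.
  by rewrite bnd_simp.
  by rewrite bnd_simp ltW.
apply/measurable_funU; [exact: measurable_itv|exact: measurable_itv|split].
  have ms : measurable_fun `[0, tau[%classic (fun t => v (k j) (t + (T (k j) - tau))).
    apply: meas_shift mk _ => //.
    move=> t /=; rewrite !in_itv /= => /andP[h1 h2].
    apply/andP; split; lra.
  apply: (eq_measurable_fun _ _ ms).
  move=> t; rewrite inE /= in_itv /= => /andP[h1 h2].
  rewrite /delayed j1 andbT.
  have -> : t - tau < 0 by lra.
  by congr (v (k j)); ring.
have ms : measurable_fun `[tau, T j]%classic (fun t => v j (t + - tau)).
  apply: meas_shift mj _ => //.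
  move=> t /=; rewrite !in_itv /= => /andP[h1 h2].
  apply/andP; split; lra.
apply: (eq_measurable_fun _ _ ms).
move=> t; rewrite inE /= in_itv /= => /andP[h1 h2].
rewrite /delayed j1 andbT.
by have -> : (t - tau < 0) = false by apply/negbTE; rewrite -leNgt; lra.
Qed.

Lemma edge_final (R : realType) (T b c E s : R) (u g w : R -> R) :
  0 < T -> 0 <= E -> 0 < s ->
  measurable_fun `[0, T]%classic u -> measurable_fun `[0, T]%classic g ->
  measurable_fun `[0, T]%classic (fun y => g y + b * u y + c * w y) ->
  (forall t, 0 <= t <= T -> `|u t| <= E * s) ->
  (forall t, 0 <= t <= T -> `|w t| <= E * s) ->
  (\int[lebesgue_measure]_(t in `[0%R, T%R]%classic) ((u t) ^+ 2 + (g t) ^+ 2)%:E <=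
   \int[lebesgue_measure]_(t in `[0%R, T%R]%classic) ((g t + b * u t + c * w t) ^+ 2)%:E
   + \int[lebesgue_measure]_(t in `[0%R, T%R]%classic) ((g t + b * u t + c * w t) ^+ 2)%:E
   + ((`|T| * (E ^+ 2 + 2 * ((`|b| + `|c|) * E) ^+ 2)) * s ^+ 2)%:E)%E.
Proof.
move=> T0 E0 s0 mU mg mf hu hw.
set C := E ^+ 2 * s ^+ 2 + 2 * ((`|b| + `|c|) * E * s) ^+ 2.
have C0 : 0 <= C by rewrite /C; apply: addr_ge0; apply: mulr_ge0; rewrite ?sqr_ge0 //; lra.
have mi : measurable (`[0, T]%classic : set R) by exact: measurable_itv.
set F2 := (fun t => ((g t + b * u t + c * w t) ^+ 2)%:E) : R -> \bar R.
have F20 : forall t, `[0, T]%classic t -> (0 <= F2 t)%E by move=> t _; rewrite lee_fin sqr_ge0.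
have mF2 : measurable_fun `[0, T]%classic F2.
  by apply/measurable_EFinP; exact: measurable_funX.
have C0' : forall t, `[0, T]%classic t -> (0 <= (cst C%:E : R -> \bar R) t)%E.
  by move=> t _; rewrite lee_fin.
have mC : measurable_fun `[0, T]%classic (cst C%:E : R -> \bar R) by exact: measurable_cst.
have eT : (`|T| * (E ^+ 2 + 2 * ((`|b| + `|c|) * E) ^+ 2)) * s ^+ 2 = C * T.
  by rewrite gtr0_norm // /C; ring.
rewrite eT.
have -> : ((C * T)%:E = \int[lebesgue_measure]_(t in `[0%R, T%R]%classic) (cst C%:E) t)%E.
  rewrite integral_cst // EFinM; congr (_ * _)%E.
  apply: esym; exact: (etrans (@mu_itv R 0 T (ltW T0)) (congr1 EFin (subr0 T))).
rewrite -(ge0_integralD lebesgue_measure mi F20 mF2 F20 mF2).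
have F220 : forall t, `[0, T]%classic t -> (0 <= (fun t => F2 t + F2 t) t)%E.
  by move=> t ht; rewrite adde_ge0 // F20.
have mF22 : measurable_fun `[0, T]%classic (fun t => F2 t + F2 t).
  exact: emeasurable_funD.
rewrite -(ge0_integralD lebesgue_measure mi F220 mF22 C0' mC).
apply: ge0_le_integral => //.
- by move=> t _; rewrite lee_fin addr_ge0 // sqr_ge0.
- apply/measurable_EFinP; apply: measurable_funD; exact: measurable_funX.
- exact: emeasurable_funD.
move=> t; rewrite /= in_itv /= => ht.
rewrite /F2 -!EFinD lee_fin.
have hut := hu t ht; have hwt := hw t ht.
set f := g t + b * u t + c * w t.
have eg : g t = f - b * u t - c * w t by rewrite /f; ring.
have hg : `|g t| <= `|f| + (`|b| + `|c|) * E * s.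
  rewrite eg.
  apply: (le_trans (ler_normB _ _)).
  apply: (le_trans (lerD (ler_normB _ _) (lexx _))).
  rewrite !normrM -addrA lerD2l.
  have h1 : `|b| * `|u t| <= `|b| * (E * s) by apply: ler_wpM2l.
  have h2 : `|c| * `|w t| <= `|c| * (E * s) by apply: ler_wpM2l.
  have -> : (`|b| + `|c|) * E * s = `|b| * (E * s) + `|c| * (E * s) by ring.
  exact: lerD.
set M := (`|b| + `|c|) * E * s in hg.
have M0 : 0 <= M by rewrite /M !mulr_ge0 // ?addr_ge0 // ltW.
have hu2 : u t ^+ 2 <= E ^+ 2 * s ^+ 2.
  rewrite -real_normK ?num_real // -exprMn.
  by rewrite ler_pXn2r // nnegrE // mulr_ge0 // ltW.
have hg2 : g t ^+ 2 <= (`|f| + M) ^+ 2.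
  rewrite -real_normK ?num_real //.
  by rewrite ler_pXn2r // nnegrE // addr_ge0.
have hf2 : `|f| ^+ 2 = f ^+ 2 by rewrite real_normK ?num_real.
have : (`|f| + M) ^+ 2 <= 2 * `|f| ^+ 2 + 2 * M ^+ 2.
  have := sqr_ge0 (`|f| - M).
  have -> : (`|f| - M) ^+ 2 = `|f| ^+ 2 - 2 * `|f| * M + M ^+ 2 by ring.
  have -> : (`|f| + M) ^+ 2 = `|f| ^+ 2 + 2 * `|f| * M + M ^+ 2 by ring.
  lra.
rewrite hf2 /C -/M => h.
lra.
Qed.


Theorem lemma6 (R : realType) (m d : nat) (k : nat -> nat) (T : nat -> R)
  (tau : R) (b c : nat -> R) :
  tree_data m d k ->
  (forall j, (1 <= j <= m)%N -> 0 < T j) ->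
  0 <= tau ->
  (forall j, (1 <= j <= m)%N -> tau < T j) ->
  exists C1 : R, 0 < C1 /\
    forall v : nat -> R -> R, in_W m d k T tau v ->
    forall g : nat -> R -> R,
      (forall j, (1 <= j <= m)%N -> weak_deriv 0 (T j) (v j) (g j)) ->
      (C1%:E * normW2 m T v g <= Jfun m k T tau b c v g)%E.
Proof.
move=> td Tpos tau0 tauT.
have [K [K1 hK]] : exists K, 1 <= K /\ forall j, (1 <= j <= m)%N -> EP (T j) (b j) (c j) K.
  apply: unif_K; first by move=> j K K' h hh; exact: EP_mono h hh.
  by move=> j hj; exact: edge (Tpos j hj).
have [N hN] : exists N, forall j, (1 <= j <= m)%N -> exists2 n, (n <= N)%N & iter n k j = 0%N.
  apply: unif_depth; by case: td => [_ [_ [_ [hit _]]]].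
pose Dn n := iter n (fun x => K * (1 + x)) (0 : R).
have DnS : forall n, Dn n.+1 = K * (1 + Dn n) by [].
have Dn0 : forall n, 0 <= Dn n.
  elim=> [|n IH]; first by rewrite /Dn /=.
  by rewrite DnS mulr_ge0 //; lra.
have DnI : forall n, Dn n <= Dn n.+1.
  elim=> [|n IH]; first exact: (Dn0 1%N).
  rewrite (DnS n.+1) {1}(DnS n).
  by apply: ler_wpM2l; lra.
have Dnmono : forall n, (n <= N)%N -> Dn n <= Dn N.
  move=> n; elim: N {hN} => [|M IH] hn.
    by rewrite leqn0 in hn; rewrite (eqP hn).
  rewrite leq_eqVlt in hn; case/orP: hn => [/eqP ->|hn]; first by [].
  exact: le_trans (IH hn) (DnI M).
set E := Dn N.
have E0 : 0 <= E by exact: Dn0.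
pose Z j := `|T j| * (E ^+ 2 + 2 * ((`|b j| + `|c j|) * E) ^+ 2).
set Ztot := \sum_(1 <= j < m.+1) Z j.
have Z0 : 0 <= Ztot.
  by apply: sumr_ge0 => j _; rewrite mulr_ge0 // addr_ge0 // ?sqr_ge0 // mulr_ge0 // sqr_ge0.
exists (2 + Ztot)^-1; split; first by rewrite invr_gt0; lra.
move=> v hv g hg.
case: (hv) => [hW1 [hW2 [hcont [_ h1zero]]]].
have m1 : (1 <= 1 <= m)%N by case: td.
have j2 : forall j, (1 <= j <= m)%N -> j != 1%N -> (2 <= j <= m)%N.
  by move=> j /andP[h1 h2] j1; rewrite h2 andbT ltn_neqAle eq_sym j1 h1.
have hmf : forall j, (1 <= j <= m)%N -> measurable_fun `[0, T j]%classic
    (fun y => g j y + b j * v j y + c j * delayed k T tau v j y).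
  move=> j hj.
  have mg : measurable_fun `[0, T j]%classic (g j) by case: (hg j hj).
  have mv := meas_wd (ltW (Tpos j hj)) (hg j hj).
  have md : measurable_fun `[0, T j]%classic (delayed k T tau v j).
    case: (eqVneq j 1%N) => [ej|j1].
      by rewrite ej; apply: meas_delayed1 => //; apply: tauT.
    have hk := kj_range _ _ _ _ td (j2 j hj j1).
    apply: meas_delayed2 => //; [exact: tauT|exact: tauT|].
    exact: meas_wd (ltW (Tpos _ hk)) (hg _ hk).
  apply: measurable_funD; first apply: measurable_funD => //.
    exact: measurable_funM (measurable_cst _) mv.
  exact: measurable_funM (measurable_cst _) md.
have key : forall s, 0 < s ->
    (forall j, (1 <= j <= m)%N ->
      (\int[lebesgue_measure]_(y in `[0%R, T j]%classic) ((ell k T tau b c v g j y) ^+ 2)%:E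
        <= (s ^+ 2)%:E)%E) ->
    (normW2 m T v g <= Jfun m k T tau b c v g + Jfun m k T tau b c v g
       + (Ztot * s ^+ 2)%:E)%E.
  move=> s s0 hs.
  have Rn : forall n j, (1 <= j <= m)%N -> iter n k j = 0%N ->
      forall t, 0 <= t <= T j -> `|v j t| <= Dn n * s.
    elim=> [|n IH] j hj hit t ht.
      by move: hj; rewrite /= in hit; rewrite hit.
    have Pn := Dn0 n.
    case: (eqVneq j 1%N) => [ej|j1].
      rewrite ej in hj ht *.
      have hu0 : `|v 1%N 0| <= 0 by rewrite h1zero ?normr0 // lexx andbT oppr_le0.
      have hw : forall t', 0 <= t' <= T 1%N -> `|delayed k T tau v 1%N t'| <= 0 \/
          exists2 t'', 0 <= t'' <= t' & delayed k T tau v 1%N t' = v 1%N t''.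
        move=> t' /andP[t'0 t'T]; rewrite /delayed eqxx andbF.
        case: (ltP (t' - tau) 0) => h.
          by left; rewrite h1zero ?normr0 // (ltW h) andbT; lra.
        by right; exists (t' - tau) => //; rewrite h /=; lra.
      have := hK 1%N hj (v 1%N) (g 1%N) (delayed k T tau v 1%N) s 0
        (hg 1%N hj) (hmf 1%N hj) (hs 1%N hj) s0 (lexx 0) hu0 hw t ht.
      move=> h; apply: (le_trans h).
      rewrite DnS addr0.
      have : 0 <= K * Dn n * s by rewrite !mulr_ge0 // ?ltW //; lra.
      have -> : K * (1 + Dn n) * s = K * s + K * Dn n * s by ring.
      lra.
    have hj2 := j2 j hj j1.
    have hk := kj_range _ _ _ _ td hj2.
    have hit' : iter n k (k j) = 0%N by rewrite -iterSr.
    have IHk := IH (k j) hk hit'.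
    have P0 : 0 <= Dn n * s by rewrite mulr_ge0 // ltW.
    have hu0 : `|v j 0| <= Dn n * s.
      rewrite hcont //; apply: IHk.
      by rewrite lexx ltW // Tpos.
    have hw : forall t', 0 <= t' <= T j -> `|delayed k T tau v j t'| <= Dn n * s \/
        exists2 t'', 0 <= t'' <= t' & delayed k T tau v j t' = v j t''.
      move=> t' /andP[t'0 t'T]; rewrite /delayed j1 andbT.
      case: (ltP (t' - tau) 0) => h.
        left; apply: IHk.
        have := tauT _ hk.
        by move=> hh; apply/andP; split; lra.
      by right; exists (t' - tau) => //; rewrite h /=; lra.
    have := hK j hj (v j) (g j) (delayed k T tau v j) s (Dn n * s)
      (hg j hj) (hmf j hj) (hs j hj) s0 P0 hu0 hw t ht.
    move=> h; apply: (le_trans h).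
    by rewrite DnS (_ : K * (1 + Dn n) * s = K * (s + Dn n * s)) //; ring.
  have hvb : forall j, (1 <= j <= m)%N -> forall t, 0 <= t <= T j -> `|v j t| <= E * s.
    move=> j hj t ht; have [n hn hit] := hN j hj.
    apply: le_trans (Rn n j hj hit t ht) _.
    by apply: ler_wpM2r; [exact: ltW | exact: Dnmono].
  have Es0 : 0 <= E * s by rewrite mulr_ge0 // ltW.
  have hwb : forall j, (1 <= j <= m)%N -> forall t, 0 <= t <= T j ->
      `|delayed k T tau v j t| <= E * s.
    move=> j hj t /andP[t0 tT].
    case: (eqVneq j 1%N) => [ej|j1].
      rewrite ej in hj tT *; rewrite /delayed eqxx andbF.
      case: (ltP (t - tau) 0) => h.
        by rewrite h1zero ?normr0 // (ltW h) andbT; lra.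
      by apply: hvb => //; apply/andP; split; lra.
    have hk := kj_range _ _ _ _ td (j2 j hj j1).
    rewrite /delayed j1 andbT.
    case: (ltP (t - tau) 0) => h.
      apply: hvb => //.
      have := tauT _ hk.
      by move=> hh; apply/andP; split; lra.
    by apply: hvb => //; apply/andP; split; lra.
  rewrite /normW2 /Jfun.
  have -> : Ztot * s ^+ 2 = \sum_(1 <= j < m.+1) (Z j * s ^+ 2) by rewrite /Ztot mulr_suml.
  apply: sum_bound.
    by move=> i; apply: integral_ge0 => y _; rewrite lee_fin sqr_ge0.
  move=> j hj.
  apply: edge_final => //.
  - exact: Tpos.
  - exact: meas_wd (ltW (Tpos j hj)) (hg j hj).
  - by case: (hg j hj).
  - exact: hmf.
  - exact: hvb.
  - exact: hwb.
set J := Jfun m k T tau b c v g in key *.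
have G0 : forall i, (0 <= \int[lebesgue_measure]_(y in `[0%R, T i]%classic)
    ((ell k T tau b c v g i y) ^+ 2)%:E)%E.
  by move=> i; apply: integral_ge0 => y _; rewrite lee_fin sqr_ge0.
have J0 : (0 <= J)%E by apply: sume_ge0 => i _; exact: G0.
have hG : forall j, (1 <= j <= m)%N ->
    (\int[lebesgue_measure]_(y in `[0%R, T j]%classic)
      ((ell k T tau b c v g j y) ^+ 2)%:E <= J)%E.
  move=> j hj; rewrite /J /Jfun.
  have hh := (@sum_term_le R (fun i => (\int[lebesgue_measure]_(y in `[0%R, T i]%classic)
      ((ell k T tau b c v g i y) ^+ 2)%:E)%E) m j G0 hj).
  exact hh.
have [Jf|Jnf] := boolP (J \is a fin_num); last first.
  have -> : J = +oo%E.
    apply/eqP; rewrite eq_le leey /= leNgt.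
    by rewrite -ge0_fin_numE.
  exact: leey.
set F := fine J.
have eJ : J = F%:E by rewrite /F fineK.
have F0 : 0 <= F by rewrite -lee_fin -eJ.
have hNW : (normW2 m T v g <= ((2 + Ztot) * F)%:E)%E.
  apply/lee_addgt0Pr => e e0.
  set e' := e / (Ztot + 1).
  have e'0 : 0 < e' by rewrite divr_gt0 //; lra.
  have ee : e' * (Ztot + 1) = e by rewrite /e' mulfVK // gt_eqF //; lra.
  have Fe : 0 < F + e' by lra.
  set s := Num.sqrt (F + e').
  have s0 : 0 < s by rewrite sqrtr_gt0.
  have hs2 : s ^+ 2 = F + e' by rewrite sqr_sqrtr // ltW.
  have := key s s0.
  have hs : forall j, (1 <= j <= m)%N ->
      (\int[lebesgue_measure]_(y in `[0%R, T j]%classic) ((ell k T tau b c v g j y) ^+ 2)%:E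
        <= (s ^+ 2)%:E)%E.
    move=> j hj; apply: (le_trans (hG j hj)).
    by rewrite eJ hs2 lee_fin; lra.
  move=> /(_ hs) h; apply: (le_trans h).
  rewrite eJ hs2 -!EFinD lee_fin.
  have : Ztot * e' <= e.
    have -> : Ztot * e' = e - e' by rewrite -ee; ring.
    lra.
  have -> : Ztot * (F + e') = Ztot * F + Ztot * e' by ring.
  have -> : (2 + Ztot) * F = F + F + Ztot * F by ring.
  lra.
rewrite eJ.
apply: (le_trans (lee_wpmul2l _ hNW)).
  by rewrite lee_fin invr_ge0; lra.
rewrite -EFinM mulrA mulVf ?mul1r //.
by rewrite gt_eqF //; lra.
Qed.
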